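(* Let $\sigma$ be the map $\sigma^a(R)=hR^aJ(g;R)$, $\sigma^N(R)=A(g;R)J(g;R)$, let $\sigma^q_p=\partial\sigma^q/\partial R^p$, and for $R$ with $q(R)>0$ put $t=\sigma(R)$, $S(t)=\sqrt{r_{rs}t^rt^s}$, $L^p=t^p/S(t)$, $L_p=r_{pq}L^q$. Then $$n^{rs}:=\sigma^r_p\,\sigma^s_q\,g^{pq}(g;R)=h^2r^{rs}+\tfrac14g^2L^rL^s,$$ its inverse is $$n_{rs}=\frac1{h^2}r_{rs}-\frac14G^2L_rL_s,$$ and $\det(n_{rs})=h^{2(1-N)}\det(r_{ab})$.
   Context: Let $N\ge2$, $V_N=\mathbb{R}^N$ with points $R=(R^1,\dots,R^N)$, $Z=R^N$; indices $a,b$ run over $1,\dots,N-1$, $p,q,r,s$ over $1,\dots,N$, repeated indices summed. Fix a symmetric positive-definite matrix $(r_{ab})$, $q(R)=\sqrt{r_{ab}R^aR^b}$, and let $r_{pq}$ be the $N\times N$ matrix with $r_{NN}=1$, $r_{Na}=0$ and entries $r_{ab}$, with inverse $r^{pq}$. Fix $g\in(-2,2)$, $h=\sqrt{1-g^2/4}$, $G=g/h$. Define $B(g;R)=Z^2+gqZ+q^2$, $A(g;R)=Z+\frac12gq$, $\Phi(g;R)=\arctan(A/(hq))$ for $q>0$ ($\Phi=\pm\pi/2$ if $q=0$, $Z\gtrless0$), $J(g;R)=e^{\frac12G\Phi}$, the Finsleroid metric function $K(g;R)=\sqrt{B}\,J$, the Finsler metric tensor $g_{pq}=\frac12\partial^2K^2/\partial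 R^p\partial R^q$ and its inverse $g^{pq}$. *)

(* Defs.v *)
From HB Require Import structures.
From mathcomp Require Import all_boot all_order all_algebra.
From mathcomp Require Import all_classical all_reals all_analysis.
Set Implicit Arguments. Unset Strict Implicit. Unset Printing Implicit Defensive.
Import Order.TTheory GRing.Theory Num.Theory.
Import numFieldNormedType.Exports.
Local Open Scope ring_scope.

(* Dimension N = n.+1 (N >= 2 means 0 < n). Coordinates R^1..R^N are the
   entries x 0 p, p : 'I_n.+1; R^N = Z is the entry at ord_max, and the
   index a in 1..N-1 corresponds to lift ord_max a, a : 'I_n. *)
Section Finsleroid.
Variables (R : realType) (n : nat) (r : 'M[R]_n) (g : R).

Definition hh : R := Num.sqrt (1 - g ^+ 2 / 4).
Definition GG : R := g / hh.

Definition rfull : 'M[R]_n.+1 := \matrix_(p, q)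
  match unlift ord_max p, unlift ord_max q with
  | Some a, Some b => r a b
  | None, None => 1
  | _, _ => 0
  end.

Definition Zc (x : 'rV[R]_n.+1) : R := x 0 ord_max.
Definition qq (x : 'rV[R]_n.+1) : R :=
  Num.sqrt (\sum_(a < n) \sum_(b < n)
              r a b * x 0 (lift ord_max a) * x 0 (lift ord_max b)).
Definition BB (x : 'rV[R]_n.+1) : R := Zc x ^+ 2 + g * qq x * Zc x + qq x ^+ 2.
Definition AA (x : 'rV[R]_n.+1) : R := Zc x + g * qq x / 2.
Definition PhiF (x : 'rV[R]_n.+1) : R :=
  if 0 < qq x then atan (AA x / (hh * qq x))
  else if 0 < Zc x then pi / 2 else - (pi / 2).
Definition JJ (x : 'rV[R]_n.+1) : R := expR (GG * PhiF x / 2).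
Definition KK (x : 'rV[R]_n.+1) : R := Num.sqrt (BB x) * JJ x.

Definition pd (f : 'rV[R]_n.+1 -> R) (p : 'I_n.+1) (x : 'rV[R]_n.+1) : R :=
  derive f x (delta_mx 0 p).

Definition gmet (x : 'rV[R]_n.+1) : 'M[R]_n.+1 :=
  \matrix_(p, q) (pd (pd (fun y => KK y ^+ 2) q) p x / 2).
Definition ginv (x : 'rV[R]_n.+1) : 'M[R]_n.+1 := invmx (gmet x).

(* the map sigma and its Jacobian sigma^q_p (row q, column p) *)
Definition sigma (x : 'rV[R]_n.+1) : 'rV[R]_n.+1 :=
  \row_p (if p == ord_max then AA x * JJ x else hh * x 0 p * JJ x).
Definition sigJac (x : 'rV[R]_n.+1) : 'M[R]_n.+1 :=
  \matrix_(q, p) pd (fun y => sigma y 0 q) p x.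

Definition nup (x : 'rV[R]_n.+1) : 'M[R]_n.+1 :=
  sigJac x *m ginv x *m (sigJac x)^T.

Definition St (t : 'rV[R]_n.+1) : R := Num.sqrt ((t *m rfull *m t^T) 0 0).
Definition Lup (x : 'rV[R]_n.+1) : 'rV[R]_n.+1 := (St (sigma x))^-1 *: sigma x.
Definition Llow (x : 'rV[R]_n.+1) : 'rV[R]_n.+1 := Lup x *m rfull.

End Finsleroid.

(* Main.v *)
Require Import Defs.
From HB Require Import structures.
From mathcomp Require Import all_boot all_order all_algebra.
From mathcomp Require Import all_classical all_reals all_analysis.
From mathcomp Require Import ring lra.
Import Order.TTheory GRing.Theory Num.Theory.
Import numFieldNormedType.Exports.
Local Open Scope ring_scope.

Set Implicit Arguments. Unset Strict Implicit. Unset Printing Implicit Defensive.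

Section DerInfra.
Local Open Scope classical_set_scope.
Variables (R : realType) (V : normedModType R).

Lemma derive_lineE (f : V -> R) x v :
  'D_v f x = 'D_1 (fun t : R => f (t *: v + x)) 0.
Proof.
rewrite /derive; set g1 := fun h => h^-1 *: _; set g2 := fun h => h^-1 *: _.
suff -> : g1 = g2 by [].
by rewrite funeqE /g1 /g2 => h /=; rewrite addr0 scale0r add0r [_%:A]mulr1.
Qed.

Lemma is_derive_lineP (f : V -> R) x v df :
  is_derive x v f df <-> is_derive (0:R) 1 (fun t : R => f (t *: v + x)) df.
Proof.
split=> -[d1 d2].
  apply: DeriveDef; first exact: (proj1 (derivable1P _ _ _) d1).
  by rewrite -derive_lineE.
apply: DeriveDef; first exact: (proj2 (derivable1P _ _ _) d1).
by rewrite derive_lineE.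
Qed.

Lemma is_derive_chain (f : V -> R) (h : R -> R) x v df dh :
  is_derive x v f df -> is_derive (f x) 1 h dh ->
  is_derive x v (fun y => h (f y)) (dh * df).
Proof.
move=> /is_derive_lineP Hf Hh; apply/is_derive_lineP.
have Hh' : is_derive ((fun t : R => f (t *: v + x)) 0) 1 h dh.
  by rewrite scale0r add0r.
exact: (is_derive1_comp Hh' Hf).
Qed.

Lemma is_derive_local (f f' : V -> R) x v df :
  is_derive x v f df ->
  (\forall t \near (0:R), f (t *: v + x) = f' (t *: v + x)) ->
  is_derive x v f' df.
Proof.
move=> /is_derive_lineP Hf Hn; apply/is_derive_lineP.
exact: (near_eq_is_derive Hn Hf).
Qed.

Lemma is_derive_near_pos (f : V -> R) x v df :
  is_derive x v f df -> 0 < f x ->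
  \forall t \near (0:R), 0 < f (t *: v + x).
Proof.
move=> /is_derive_lineP [d1 _] fx.
have /differentiable_continuous c : differentiable (fun t : R => f (t *: v + x)) 0.
  exact/derivable1_diffP.
have e : (0:R) *: v + x = x by rewrite scale0r add0r.
have := cvgr_gt _ c 0; rewrite /= e; move=> /(_ _ fx); exact.
Qed.

Lemma dD (f g : V -> R) x v df dg : is_derive x v f df -> is_derive x v g dg ->
  is_derive x v (fun y => f y + g y) (df + dg).
Proof. move=> H1 H2; exact: is_deriveD. Qed.

Lemma dM (f g : V -> R) x v df dg : is_derive x v f df -> is_derive x v g dg ->
  is_derive x v (fun y => f y * g y) (f x * dg + g x * df).
Proof. move=> H1 H2; exact: is_deriveM. Qed.

Lemma dC (c : R) x v : is_derive x v (fun _ : V => c) 0.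
Proof. exact: is_derive_cst. Qed.

Lemma dE (f : V -> R) x v df df' : is_derive x v f df -> df = df' -> is_derive x v f df'.
Proof. by move=> H <-. Qed.

Lemma dfun (f f' : V -> R) x v df : is_derive x v f df -> f = f' -> is_derive x v f' df.
Proof. by move=> H <-. Qed.


Lemma dS m (F : 'I_m -> V -> R) x v (dF : 'I_m -> R) :
  (forall i, is_derive x v (F i) (dF i)) ->
  is_derive x v (fun y => \sum_(i < m) F i y) (\sum_(i < m) dF i).
Proof.
move=> H.
have := @is_derive_sum R V R^o m F x v dF H.
by rewrite fct_sumE.
Qed.

Lemma dV (f : V -> R) x v df : is_derive x v f df -> f x != 0 ->
  is_derive x v (fun y => (f y)^-1) (- (f x)^-2 * df).
Proof.
move=> H fx0.
have H2 : is_derive (f x) 1 (fun y : R => y^-1) (- (f x)^-2).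
  have := @is_deriveV R id (f x) 1 1 fx0 (is_derive_id _ _).
  by rewrite /= [_%:A]mulr1.
by have := is_derive_chain H H2.
Qed.

Lemma dsqrt (f : V -> R) x v df : is_derive x v f df -> 0 < f x ->
  is_derive x v (fun y => Num.sqrt (f y)) ((2 * Num.sqrt (f x))^-1 * df).
Proof. move=> H fx0; exact: (is_derive_chain H (is_derive1_sqrt fx0)). Qed.

Lemma dexp (f : V -> R) x v df : is_derive x v f df ->
  is_derive x v (fun y => expR (f y)) (expR (f x) * df).
Proof. move=> H; exact: (is_derive_chain H (is_derive_expR _)). Qed.

Lemma datan (f : V -> R) x v df : is_derive x v f df ->
  is_derive x v (fun y => atan (f y)) ((1 + f x ^+ 2)^-1 * df).
Proof. move=> H; exact: (is_derive_chain H (is_derive1_atan _)). Qed.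

Lemma dZl (c : R) (f : V -> R) x v df : is_derive x v f df ->
  is_derive x v (fun y => c * f y) (c * df).
Proof. move=> H; apply: dE (dM (dC c x v) H) _; by rewrite mulr0 addr0. Qed.

Lemma dB (f g : V -> R) x v df dg : is_derive x v f df -> is_derive x v g dg ->
  is_derive x v (fun y => f y - g y) (df - dg).
Proof. move=> H1 H2; exact: is_deriveB. Qed.

Lemma dval (f : V -> R) x v df : is_derive x v f df -> 'D_v f x = df.
Proof. by case. Qed.

End DerInfra.

Set Implicit Arguments. Unset Strict Implicit. Unset Printing Implicit Defensive.

Section Fin.
Local Open Scope classical_set_scope.
Variables (R : realType) (n : nat) (r : 'M[R]_n) (g : R).
Hypothesis gb : -2 < g < 2.

Local Notation V := 'rV[R]_n.+1.
Local Notation la := (lift ord_max).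
Local Notation N := (@ord_max n).

Definition Qf (y : V) : R :=
  \sum_(a < n) \sum_(b < n) r a b * y 0 (la a) * y 0 (la b).
Definition dQ (y v : V) : R :=
  \sum_(a < n) \sum_(b < n) r a b * (v 0 (la a) * y 0 (la b) + y 0 (la a) * v 0 (la b)).

Lemma qqE y : qq r y = Num.sqrt (Qf y).
Proof. by []. Qed.

Lemma dcoord (k : 'I_n.+1) (y v : V) : is_derive y v (fun z : V => z 0 k) (v 0 k).
Proof.
apply/is_derive_lineP.
have -> : (fun t : R => (t *: v + y) 0 k) = (fun t : R => t * v 0 k + y 0 k).
  by rewrite funeqE => t; rewrite !mxE.
apply: (dE (dD (dM (@is_derive_id R R 0 1) (@dC R R (v 0 k) 0 1)) (@dC R R (y 0 k) 0 1))).
by rewrite /= mulr0 add0r mulr1 addr0.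
Qed.

Lemma derQ y v : is_derive y v Qf (dQ y v).
Proof.
rewrite /Qf /dQ; apply: dS => a; apply: dS => b.
apply: (dE (dM (dM (dC (r a b) y v) (dcoord _ _ _)) (dcoord _ _ _))).
by rewrite mulr0 addr0; ring.
Qed.

Lemma derdQ w y v : is_derive y v (fun z => dQ z w) (dQ v w).
Proof.
rewrite /dQ; apply: dS => a; apply: dS => b.
apply: (dE (dZl (r a b) (dD (dM (dC (w 0 (la a)) y v) (dcoord (la b) _ _)) (dM (dcoord (la a) _ _) (dC (w 0 (la b)) y v))))).
by rewrite !mulr0 !addr0; ring.
Qed.


Lemma hh2 : hh g ^+ 2 = 1 - g ^+ 2 / 4.
Proof.
rewrite /hh sqr_sqrtr //; move/andP: gb => [g1 g2]; nra.
Qed.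

Lemma hh_gt0 : 0 < hh g.
Proof.
rewrite /hh sqrtr_gt0; move/andP: gb => [g1 g2]; nra.
Qed.

Lemma four_g2 : 4 - g ^+ 2 != 0.
Proof. rewrite gt_eqF //; move/andP: gb => [g1 g2]; nra. Qed.

Lemma hh_neq0 : hh g != 0. Proof. by rewrite gt_eqF // hh_gt0. Qed.

Lemma BBE y : BB r g y = hh g ^+ 2 * qq r y ^+ 2 + AA r g y ^+ 2.
Proof. by rewrite /BB /AA hh2; field. Qed.

Lemma BB_gt0 y : 0 < qq r y -> 0 < BB r g y.
Proof.
move=> hq; rewrite BBE; have h0 := hh_gt0.
have : 0 < hh g ^+ 2 * qq r y ^+ 2 by rewrite mulr_gt0 // exprn_gt0.
have : 0 <= AA r g y ^+ 2 by rewrite sqr_ge0.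
lra.
Qed.

Lemma BB_ge0 y : 0 <= BB r g y.
Proof.
rewrite BBE; have h0 := hh_gt0.
have : 0 <= hh g ^+ 2 * qq r y ^+ 2 by rewrite mulr_ge0 // sqr_ge0.
have : 0 <= AA r g y ^+ 2 by rewrite sqr_ge0.
lra.
Qed.

Lemma BB_neq0 y : 0 < qq r y -> BB r g y != 0.
Proof. by move=> hq; rewrite gt_eqF // BB_gt0. Qed.

Lemma KK2 y : KK r g y ^+ 2 = BB r g y * JJ r g y ^+ 2.
Proof. by rewrite /KK exprMn sqr_sqrtr // BB_ge0. Qed.

Lemma Qf_gt0 y : 0 < qq r y -> 0 < Qf y.
Proof. by rewrite qqE sqrtr_gt0. Qed.

Lemma param : exists s : R,
  [/\ hh g = (1 - s ^+ 2) / (1 + s ^+ 2), g = 4 * s / (1 + s ^+ 2),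
      1 - s ^+ 2 != 0 & 1 + s ^+ 2 != 0].
Proof.
have h0 := hh_gt0; have h2 := hh2.
have h1 : 1 + hh g != 0 by rewrite gt_eqF //; lra.
have g2 : g ^+ 2 = 4 * (1 - hh g) * (1 + hh g) by rewrite -mulrA -subr_sqr expr1n h2; field.
pose s := g / (2 * (1 + hh g)).
have s2 : s ^+ 2 = (1 - hh g) / (1 + hh g).
  by rewrite /s expr_div_n g2; field; rewrite h1.
have u0 : 1 + s ^+ 2 != 0.
  by rewrite gt_eqF // ltr_wpDr ?sqr_ge0 // ltr01.
exists s; split => //.
- by rewrite s2; field; rewrite h1 /=; apply/eqP => E; move: h0; lra.
- move: u0; rewrite s2 /s => u0; field; rewrite h1 /=.
  by apply/eqP => E; move: h0; lra.
- rewrite s2.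
  have -> : 1 - (1 - hh g) / (1 + hh g) = 2 * hh g / (1 + hh g) by field.
  by rewrite mulf_neq0 ?invr_eq0 // mulf_neq0 // gt_eqF.
Qed.

Definition dq y v := dQ y v / (2 * qq r y).

Lemma derq y v : 0 < qq r y -> is_derive y v (qq r) (dq y v).
Proof.
move=> hq; apply: (dE (dsqrt (derQ y v) (Qf_gt0 hq))).
by rewrite -qqE /dq mulrC.
Qed.

Lemma derA y v : 0 < qq r y ->
  is_derive y v (AA r g) (v 0 N + g * dq y v / 2).
Proof.
move=> hq.
apply: (dE (dD (dcoord N y v) (dM (dM (dC g y v) (derq v hq)) (dC (2^-1) y v)))).
by field.
Qed.

Definition Ph y := atan (AA r g y / (hh g * qq r y)).
Definition dPh (y v : V) := hh g * (qq r y * v 0 N - Zc y * dq y v) / BB r g y.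

Lemma derPh y v : 0 < qq r y -> is_derive y v Ph (dPh y v).
Proof.
move=> hq.
have hq0 : hh g * qq r y != 0 by rewrite mulf_neq0 ?hh_neq0 // gt_eqF.
apply: (dE (datan (dM (derA v hq) (dV (dZl (hh g) (derq v hq)) hq0)))).
have B0 := BB_neq0 hq.
rewrite /dPh; move: B0; rewrite BBE /AA /Zc => B0.
have h0 := hh_neq0; have q0 : qq r y != 0 by rewrite gt_eqF.
field; rewrite q0 h0 !andbT; apply/eqP => E; have h1 := hh_gt0; nra.
Qed.

Lemma derPhiF y v : 0 < qq r y -> is_derive y v (PhiF r g) (dPh y v).
Proof.
move=> hq; apply: (is_derive_local (derPh v hq)).
have := is_derive_near_pos (derq v hq) hq; apply: filterS => t ht.
by rewrite /PhiF ht.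
Qed.

Definition dJ (y v : V) :=
  g * JJ r g y * (qq r y * v 0 N - Zc y * dq y v) / (2 * BB r g y).

Lemma derJ y v : 0 < qq r y -> is_derive y v (JJ r g) (dJ y v).
Proof.
move=> hq.
apply: (dE (dexp (dM (dM (dC (GG g) y v) (derPhiF v hq)) (dC (2^-1) y v)))).
have B0 := BB_neq0 hq; have h0 := hh_neq0.
rewrite /dJ /dPh /GG -/(JJ r g y).
by field; rewrite B0 h0.
Qed.

Lemma derK2 y v : 0 < qq r y ->
  is_derive y v (fun z => KK r g z ^+ 2)
    (JJ r g y ^+ 2 * (dQ y v + 2 * (Zc y + g * qq r y) * v 0 N)).
Proof.
move=> hq.
have -> : (fun z => KK r g z ^+ 2) = (fun z =>
   (Zc z * Zc z + g * qq r z * Zc z + qq r z * qq r z) * (JJ r g z * JJ r g z)).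
  by rewrite funeqE => z; rewrite KK2 /BB !expr2.
have dZ := dcoord N y v; have dq' := derq v hq; have dj := derJ v hq.
apply: (dE (dM (dD (dD (dM dZ dZ) (dM (dM (dC g y v) dq') dZ)) (dM dq' dq')) (dM dj dj))).
have B0 := BB_neq0 hq; have q0 : qq r y != 0 by rewrite gt_eqF.
move: B0; rewrite /dJ /dq /BB /Zc => B0.
by field; rewrite B0 q0.
Qed.

Definition Gw (w y : V) :=
  JJ r g y ^+ 2 * (dQ y w + 2 * (Zc y + g * qq r y) * w 0 N).

Lemma derG w y v : 0 < qq r y ->
  is_derive y v (Gw w)
    (JJ r g y ^+ 2 * (dQ v w + 2 * (v 0 N + g * dq y v) * w 0 N)
     + (dQ y w + 2 * (Zc y + g * qq r y) * w 0 N) * (2 * JJ r g y * dJ y v)).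
Proof.
move=> hq.
have -> : Gw w = (fun z =>
   (JJ r g z * JJ r g z) * (dQ z w + 2 * (Zc z + g * qq r z) * w 0 N)).
  by rewrite funeqE => z; rewrite /Gw !expr2.
have dZ := dcoord N y v; have dq' := derq v hq; have dj := derJ v hq.
apply: (dE (dM (dM dj dj) (dD (derdQ w y v) (dM (dM (dC 2 y v) (dD dZ (dM (dC g y v) dq'))) (dC (w 0 N) y v))))).
rewrite /Zc; ring.
Qed.

Lemma pdK2 s y : 0 < qq r y ->
  pd (fun z => KK r g z ^+ 2) s y = Gw (delta_mx 0 s) y.
Proof. by move=> hq; rewrite /pd (dval (derK2 _ hq)). Qed.

Lemma der2K2 p s x : 0 < qq r x ->
  is_derive x (delta_mx 0 p) (pd (fun z => KK r g z ^+ 2) s)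
    (let v := delta_mx 0 p in let w := delta_mx 0 s in
     JJ r g x ^+ 2 * (dQ v w + 2 * (v 0 N + g * dq x v) * w 0 N)
     + (dQ x w + 2 * (Zc x + g * qq r x) * w 0 N) * (2 * JJ r g x * dJ x v)).
Proof.
move=> hq; apply: (is_derive_local (derG (delta_mx 0 s) (delta_mx 0 p) hq)).
have := is_derive_near_pos (derq (delta_mx 0 p) hq) hq; apply: filterS => t ht.
by rewrite pdK2.
Qed.

Lemma gmetE p s x : 0 < qq r x ->
  gmet r g x p s =
    (let v := delta_mx 0 p in let w := delta_mx 0 s in
     JJ r g x ^+ 2 * (dQ v w + 2 * (v 0 N + g * dq x v) * w 0 N)
     + (dQ x w + 2 * (Zc x + g * qq r x) * w 0 N) * (2 * JJ r g x * dJ x v)) / 2.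
Proof. by move=> hq; rewrite /gmet mxE /pd (dval (der2K2 p s hq)). Qed.

Lemma derSig k y v : 0 < qq r y ->
  is_derive y v (fun z => sigma r g z 0 k)
    (if k == N then AA r g y * dJ y v + JJ r g y * (v 0 N + g * dq y v / 2)
     else hh g * (y 0 k * dJ y v + JJ r g y * v 0 k)).
Proof.
move=> hq.
have -> : (fun z => sigma r g z 0 k) = (fun z =>
   if k == N then AA r g z * JJ r g z else hh g * z 0 k * JJ r g z).
  by rewrite funeqE => z; rewrite /sigma mxE.
case: (k == N).
  exact: (dE (dM (derA v hq) (derJ v hq))).
apply: (dE (dM (dM (dC (hh g) y v) (dcoord k y v)) (derJ v hq))).
ring.
Qed.

Lemma sigJacE k p x : 0 < qq r x ->
  sigJac r g x k p =
    (let v := delta_mx 0 p in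
     if k == N then AA r g x * dJ x v + JJ r g x * (v 0 N + g * dq x v / 2)
     else hh g * (x 0 k * dJ x v + JJ r g x * v 0 k)).
Proof. by move=> hq; rewrite /sigJac mxE /pd (dval (derSig k _ hq)). Qed.

End Fin.

Set Implicit Arguments. Unset Strict Implicit. Unset Printing Implicit Defensive.

Section Alg.
Variables (R : realType) (n : nat).

Local Notation la := (lift ord_max).
Local Notation N := (@ord_max n).
Local Notation e := (delta_mx 0 N : 'rV[R]_n.+1).

Definition dot (u w : 'rV[R]_n.+1) := (u *m w^T) 0 0.
Definition bil (M : 'M[R]_n.+1) (u w : 'rV[R]_n.+1) := (u *m M *m w^T) 0 0.

Lemma sumS (F : 'I_n.+1 -> R) :
  \sum_(k < n.+1) F k = \sum_(a < n) F (la a) + F N.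
Proof.
rewrite big_ord_recr /=; congr (_ + _); apply: eq_bigr => a _.
by congr F; apply: val_inj; rewrite /= /bump leqNgt ltn_ord.
Qed.

Lemma dotE u w : dot u w = \sum_k u 0 k * w 0 k.
Proof. by rewrite /dot mxE; apply: eq_bigr => k _; rewrite mxE. Qed.

Lemma dotC u w : dot u w = dot w u.
Proof. by rewrite !dotE; apply: eq_bigr => k _; rewrite mulrC. Qed.

Lemma dot_deltar u i : dot u (delta_mx 0 i) = u 0 i.
Proof.
rewrite dotE (bigD1 i) //= big1 ?addr0; first by rewrite mxE !eqxx mulr1.
by move=> k /negbTE ki; rewrite mxE ki andbF mulr0.
Qed.

Lemma dot_deltal u i : dot (delta_mx 0 i) u = u 0 i.
Proof. by rewrite dotC dot_deltar. Qed.

Lemma bil_tr M u w : bil M u w = bil M^T w u.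
Proof.
rewrite /bil.
have -> : w *m M^T *m u^T = (u *m M *m w^T)^T by rewrite !trmx_mul trmxK mulmxA.
by rewrite [RHS]mxE.
Qed.

Lemma bilDl M u1 u2 w : bil M (u1 + u2) w = bil M u1 w + bil M u2 w.
Proof. by rewrite /bil !mulmxDl mxE. Qed.
Lemma bilZl M a u w : bil M (a *: u) w = a * bil M u w.
Proof. by rewrite /bil -!scalemxAl mxE. Qed.
Lemma bilBl M u1 u2 w : bil M (u1 - u2) w = bil M u1 w - bil M u2 w.
Proof. by rewrite bilDl -scaleN1r bilZl mulN1r. Qed.
Lemma bilDr M u w1 w2 : bil M u (w1 + w2) = bil M u w1 + bil M u w2.
Proof. by rewrite /bil linearD /= mulmxDr mxE. Qed.
Lemma bilZr M a u w : bil M u (a *: w) = a * bil M u w.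
Proof. by rewrite /bil linearZ /= -scalemxAr mxE. Qed.
Lemma bilBr M u w1 w2 : bil M u (w1 - w2) = bil M u w1 - bil M u w2.
Proof. by rewrite bilDr -scaleN1r bilZr mulN1r. Qed.
Lemma bil_deltal M i w : bil M (delta_mx 0 i) w = dot (row i M) w.
Proof. by rewrite /bil rowE. Qed.
Lemma bil_deltar M u j : bil M u (delta_mx 0 j) = (u *m M) 0 j.
Proof. by rewrite /bil -/(dot _ _) dot_deltar. Qed.

End Alg.

Section Alg2.
Variables (R : realType) (n : nat) (r : 'M[R]_n) (g : R).
Hypothesis rsym : r^T = r.

Local Notation la := (lift ord_max).
Local Notation N := (@ord_max n).
Local Notation e := (delta_mx 0 N : 'rV[R]_n.+1).
Local Notation rf := (rfull r).

Lemma rf_ll a b : rf (la a) (la b) = r a b.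
Proof. by rewrite /rfull mxE !liftK. Qed.
Lemma rf_lN a : rf (la a) N = 0.
Proof. by rewrite /rfull mxE liftK unlift_none. Qed.
Lemma rf_Nl b : rf N (la b) = 0.
Proof. by rewrite /rfull mxE liftK unlift_none. Qed.
Lemma rf_NN : rf N N = 1.
Proof. by rewrite /rfull mxE unlift_none. Qed.

Lemma rf_sym : rf^T = rf.
Proof.
apply/matrixP => i j; rewrite mxE.
case: (unliftP N i) => [a ->|->]; case: (unliftP N j) => [b ->|->];
  rewrite ?rf_ll ?rf_lN ?rf_Nl ?rf_NN //.
by rewrite -[in RHS]rsym mxE.
Qed.

Lemma rf_eN i : rf i N = (i == N)%:R.
Proof.
case: (unliftP N i) => [a ->|->]; last by rewrite rf_NN eqxx.
by rewrite rf_lN; case: eqP => // /(congr1 val) /= /eqP; rewrite /bump leqNgt ltn_ord /= add0n ltn_eqF.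
Qed.

Lemma row_rfN : row N rf = e.
Proof.
apply/rowP => j; rewrite [LHS]mxE -[rf]rf_sym [LHS]mxE rf_eN [RHS]mxE eqxx /=.
by rewrite eq_sym.
Qed.

Lemma bil_sym u w : bil rf u w = bil rf w u.
Proof. by rewrite bil_tr rf_sym. Qed.

Lemma bil_eL w : bil rf e w = w 0 N.
Proof. by rewrite bil_deltal row_rfN dot_deltal. Qed.
Lemma bil_eR u : bil rf u e = u 0 N.
Proof. by rewrite bil_sym bil_eL. Qed.
Lemma bil_dd i j : bil rf (delta_mx 0 i) (delta_mx 0 j) = rf i j.
Proof. by rewrite bil_deltal dot_deltar mxE. Qed.

Lemma quad_split (u w : 'rV[R]_n.+1) :
  \sum_(a < n) \sum_(b < n) r a b * u 0 (la a) * w 0 (la b)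
  = bil rf u w - u 0 N * w 0 N.
Proof.
apply/eqP; rewrite eq_sym subr_eq; apply/eqP.
rewrite /bil -/(dot _ _) dotE sumS.
have -> : (u *m rf) 0 N = u 0 N.
  by rewrite mxE sumS rf_NN mulr1 big1 ?add0r // => a _; rewrite rf_lN mulr0.
congr (_ + _).
have -> : \sum_(a < n) (u *m rf) 0 (la a) * w 0 (la a) =
          \sum_(b < n) (\sum_(a < n) u 0 (la a) * r a b) * w 0 (la b).
  apply: eq_bigr => b _; congr (_ * _).
  rewrite mxE sumS rf_Nl mulr0 addr0; apply: eq_bigr => a _; by rewrite rf_ll.
rewrite exchange_big /=; apply: eq_bigr => a _.
rewrite mulr_suml; apply: eq_bigr => b _.
by ring.
Qed.

Lemma dQ_bil y v : dQ r y v = 2 * (bil rf y v - y 0 N * v 0 N).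
Proof.
rewrite /dQ.
have -> : \sum_(a < n) \sum_(b < n)
    r a b * (v 0 (la a) * y 0 (la b) + y 0 (la a) * v 0 (la b)) =
  \sum_(a < n) \sum_(b < n) r a b * v 0 (la a) * y 0 (la b) +
  \sum_(a < n) \sum_(b < n) r a b * y 0 (la a) * v 0 (la b).
  rewrite -big_split; apply: eq_bigr => a _; rewrite -big_split.
  by apply: eq_bigr => b _; rewrite /= mulrDr !mulrA.
by rewrite !quad_split bil_sym; ring.
Qed.

Lemma Qf_bil y : Qf r y = bil rf y y - y 0 N ^+ 2.
Proof. by rewrite /Qf quad_split expr2. Qed.

Lemma bil_gen_dd (M : 'M[R]_n.+1) i j : bil M (delta_mx 0 i) (delta_mx 0 j) = M i j.
Proof. by rewrite bil_deltal dot_deltar mxE. Qed.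

Lemma bil_mul (M A : 'M[R]_n.+1) u w :
  bil M (u *m A) (w *m A) = bil (A *m M *m A^T) u w.
Proof. by rewrite /bil trmx_mul !mulmxA. Qed.

Lemma mul_dot (A B : 'M[R]_n.+1) i j :
  (A *m B) i j = dot (delta_mx 0 i *m A) (delta_mx 0 j *m B^T).
Proof.
rewrite /dot trmx_mul trmxK !mulmxA -(bil_gen_dd (A *m B)) /bil.
by rewrite !mulmxA.
Qed.

Lemma delta_e (p : 'I_n.+1) : (delta_mx 0 p : 'rV[R]_n.+1) 0 N = (p == N)%:R.
Proof. by rewrite mxE eqxx /= eq_sym. Qed.

Lemma dQ_dd p s : dQ r (delta_mx 0 p) (delta_mx 0 s) =
  2 * (rf p s - (p == N)%:R * (s == N)%:R).
Proof. by rewrite dQ_bil bil_dd !delta_e. Qed.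

End Alg2.

Set Implicit Arguments. Unset Strict Implicit. Unset Printing Implicit Defensive.

Section Point.
Variables (R : realType) (n : nat) (r : 'M[R]_n) (g : R) (x : 'rV[R]_n.+1).
Hypothesis rsym : r^T = r.
Hypothesis gb : -2 < g < 2.
Hypothesis hq : 0 < qq r x.

Local Notation la := (lift ord_max).
Local Notation N := (@ord_max n).
Local Notation e := (delta_mx 0 N : 'rV[R]_n.+1).
Local Notation rf := (rfull r).
Local Notation d i := (delta_mx 0 i : 'rV[R]_n.+1).
Local Notation J := (JJ r g x).
Local Notation A := (AA r g x).
Local Notation B := (BB r g x).
Local Notation q := (qq r x).
Local Notation Z := (Zc x).
Local Notation h := (hh g).

Definition Yv := locked (x - Z *: e).
Lemma YvE : Yv = x - Z *: e. Proof. by rewrite /Yv -lock. Qed.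
Definition Wv := Yv *m rf.

Lemma Yv_N : Yv 0 N = 0.
Proof. by rewrite YvE /Zc !mxE !eqxx /= mulr1 subrr. Qed.

Lemma Yv_k k : k != N -> Yv 0 k = x 0 k.
Proof. by move=> kN; rewrite YvE !mxE (negbTE kN) andbF mulr0 subr0. Qed.

Lemma bil_eY : bil rf e Yv = 0.
Proof. by rewrite bil_eL // Yv_N. Qed.
Lemma bil_Ye : bil rf Yv e = 0.
Proof. by rewrite bil_eR // Yv_N. Qed.
Lemma bil_ee : bil rf e e = 1.
Proof. by rewrite bil_eL // delta_e eqxx. Qed.

Lemma q2E : q ^+ 2 = bil rf x x - Z ^+ 2.
Proof.
rewrite qqE sqr_sqrtr -?Qf_bil //.
by apply: ltW; apply: Qf_gt0.
Qed.

Lemma bil_YY : bil rf Yv Yv = q ^+ 2.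
Proof.
rewrite q2E YvE !(bilBl, bilBr, bilZl, bilZr) bil_ee bil_eL // bil_eR //.
rewrite /Zc; ring.
Qed.

Lemma bil_dY i : bil rf (d i) Yv = Wv 0 i.
Proof. by rewrite bil_sym // bil_deltar. Qed.
Lemma bil_Yd i : bil rf Yv (d i) = Wv 0 i.
Proof. by rewrite bil_deltar. Qed.
Lemma Wv_N : Wv 0 N = 0.
Proof. by rewrite -bil_Yd bil_Ye. Qed.
Lemma dot_WY : dot Wv Yv = q ^+ 2.
Proof. by rewrite -bil_YY. Qed.

Lemma dQ_xd s : dQ r x (d s) = 2 * Wv 0 s.
Proof.
by rewrite dQ_bil // -bil_Yd YvE bilBl bilZl bil_eL // delta_e /Zc.
Qed.


Lemma J_gt0 : 0 < J.
Proof. by rewrite /JJ expR_gt0. Qed.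

Lemma sigmaE : sigma r g x = (h * J) *: Yv + (A * J) *: e.
Proof.
apply/rowP => k; rewrite [LHS]mxE [RHS]mxE [X in _ = X + _]mxE [X in _ = _ + X]mxE.
case: (eqVneq k N) => [->|kN].
  by rewrite Yv_N delta_e eqxx /= mulr1 mulr0 add0r.
rewrite Yv_k // mxE eqxx /= (negbTE kN) mulr0 addr0; ring.
Qed.

Lemma bil_ss : bil rf (sigma r g x) (sigma r g x) = J ^+ 2 * B.
Proof.
rewrite sigmaE !(bilDl, bilDr, bilZl, bilZr) bil_YY bil_eY bil_Ye bil_ee BBE //.
ring.
Qed.

Definition Sg := J * Num.sqrt B.

Lemma Sg_gt0 : 0 < Sg.
Proof. by rewrite /Sg mulr_gt0 ?J_gt0 // sqrtr_gt0 BB_gt0. Qed.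

Lemma St_s : St r (sigma r g x) = Sg.
Proof.
rewrite /St -/(bil rf _ _) bil_ss sqrtrM ?sqr_ge0 // sqrtr_sqr ger0_norm //.
exact: ltW J_gt0.
Qed.

Lemma LupE : Lup r g x = Sg^-1 *: sigma r g x.
Proof. by rewrite /Lup St_s. Qed.

Lemma LlowE : Llow r g x = Sg^-1 *: (sigma r g x *m rf).
Proof. by rewrite /Llow LupE scalemxAl. Qed.

Lemma dotZr (u w : 'rV[R]_n.+1) (a : R) : dot u (a *: w) = a * dot u w.
Proof. by rewrite /dot linearZ /= -scalemxAr mxE. Qed.
Lemma dotZl (u w : 'rV[R]_n.+1) (a : R) : dot (a *: u) w = a * dot u w.
Proof. by rewrite /dot -scalemxAl mxE. Qed.

Lemma bil_outer (a b u w : 'rV[R]_n.+1) : bil (a^T *m b) u w = dot u a * dot b w.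
Proof.
rewrite /bil /dot.
have -> : u *m (a^T *m b) *m w^T = (u *m a^T) *m (b *m w^T) by rewrite !mulmxA.
by rewrite mxE big_ord1.
Qed.

Lemma bilMD (M1 M2 : 'M[R]_n.+1) u w : bil (M1 + M2) u w = bil M1 u w + bil M2 u w.
Proof. by rewrite /bil mulmxDr mulmxDl mxE. Qed.
Lemma bilMZ a (M : 'M[R]_n.+1) u w : bil (a *: M) u w = a * bil M u w.
Proof. by rewrite /bil -scalemxAr -scalemxAl mxE. Qed.
Lemma bilMB (M1 M2 : 'M[R]_n.+1) u w : bil (M1 - M2) u w = bil M1 u w - bil M2 u w.
Proof. by rewrite bilMD -scaleN1r bilMZ mulN1r. Qed.

Lemma dot_sr (u : 'rV[R]_n.+1) : dot u (sigma r g x *m rf) = bil rf (sigma r g x) u.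
Proof.
by rewrite /dot trmx_mul rf_sym // mulmxA -/(bil rf _ _) bil_sym.
Qed.

Definition Nm := (h ^+ 2)^-1 *: rf - (GG g ^+ 2 / 4) *: ((Llow r g x)^T *m Llow r g x).
Definition Cm := h ^+ 2 *: invmx rf + (g ^+ 2 / 4) *: ((Lup r g x)^T *m Lup r g x).

Lemma bilNm (u w : 'rV[R]_n.+1) : bil Nm u w = (h ^+ 2)^-1 * bil rf u w
  - (GG g ^+ 2 / 4) * (Sg^-1 * bil rf (sigma r g x) u) * (Sg^-1 * bil rf (sigma r g x) w).
Proof.
rewrite /Nm bilMB !bilMZ bil_outer LlowE dotZr dotZl dot_sr.
rewrite dotC dot_sr; ring.
Qed.

Lemma bil_sY : bil rf (sigma r g x) Yv = h * J * q ^+ 2.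
Proof. by rewrite sigmaE bilDl !bilZl bil_YY bil_eY mulr0 addr0. Qed.
Lemma bil_se : bil rf (sigma r g x) e = A * J.
Proof. by rewrite sigmaE bilDl !bilZl bil_Ye bil_ee mulr0 add0r mulr1. Qed.
Lemma bil_sd i : bil rf (sigma r g x) (d i) = h * J * Wv 0 i + A * J * (i == N)%:R.
Proof. by rewrite sigmaE bilDl !bilZl bil_Yd bil_eL // delta_e. Qed.

Lemma row_tr_entry (M : 'M[R]_n.+1) i k : (row i M^T) 0 k = M k i.
Proof. by rewrite !mxE. Qed.

Lemma deltaE (p k : 'I_n.+1) : (delta_mx 0 p : 'rV[R]_n.+1) 0 k = (k == p)%:R.
Proof. by rewrite mxE eqxx. Qed.

Definition dJv i := dJ r g x (d i).
Definition al i := A * dJv i + J * ((i == N)%:R + g * (Wv 0 i / q) / 2) - h * J * (i == N)%:R.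
Definition be i := h * dJv i.

Lemma dq_xd i : dq r x (d i) = Wv 0 i / q.
Proof. by rewrite /dq dQ_xd; field; rewrite gt_eqF. Qed.

Lemma ciE i : d i *m (sigJac r g x)^T = (h * J) *: d i + al i *: e + be i *: Yv.
Proof.
apply/rowP => k; rewrite -rowE row_tr_entry sigJacE // /=.
rewrite [RHS]mxE [X in _ = X + _]mxE [X in _ = X + _ + _]mxE.
rewrite [X in _ = _ + X + _]mxE [X in _ = _ + X]mxE.
rewrite delta_e dq_xd -/(dJv i) /al /be.
case: (eqVneq k N) => [->|kN].
  rewrite Yv_N !delta_e eqxx /= mulr1 mulr0 addr0; ring.
rewrite Yv_k // !deltaE (negbTE kN) mulr0 addr0; ring.
Qed.


Lemma Sg2 : Sg ^+ 2 = J ^+ 2 * B.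
Proof. by rewrite /Sg exprMn sqr_sqrtr // BB_ge0. Qed.

Lemma bilNm' (u w : 'rV[R]_n.+1) : bil Nm u w = (h ^+ 2)^-1 * bil rf u w
  - (GG g ^+ 2 / 4) * (J ^+ 2 * B)^-1 * (bil rf (sigma r g x) u * bil rf (sigma r g x) w).
Proof.
rewrite bilNm -Sg2; have Sg0 : Sg != 0 by rewrite gt_eqF // Sg_gt0.
by field; rewrite Sg0 hh_neq0.
Qed.

Lemma M1 : gmet r g x = (sigJac r g x)^T *m Nm *m sigJac r g x.
Proof.
apply/matrixP => i j.
have -> : ((sigJac r g x)^T *m Nm *m sigJac r g x) i j =
   bil Nm (d i *m (sigJac r g x)^T) (d j *m (sigJac r g x)^T).
  by rewrite bil_mul trmxK bil_gen_dd.
rewrite !ciE !(bilDl, bilDr, bilZl, bilZr) !bilNm'.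
rewrite ?bil_se ?bil_sY ?bil_sd ?bil_ee ?bil_eY ?bil_Ye ?bil_YY ?bil_dY ?bil_Yd.
rewrite ?bil_eR // ?bil_eL // ?bil_dd // ?delta_e.
rewrite gmetE //; cbv zeta; rewrite dQ_dd // !dQ_xd !dq_xd !delta_e.
rewrite /al /be /dJv /dJ !dq_xd !delta_e.
have q0 : q != 0 by rewrite gt_eqF.
have J0 : J != 0 by rewrite gt_eqF // J_gt0.
have B0 := BB_neq0 gb hq.
have [s [hE gE s0 u0]] := param gb.
rewrite /GG hE; move: B0 J0; rewrite /AA /BB /Zc gE => B0 J0.
have B1 : x 0 N ^+ 2 * (1 + s ^+ 2) + 4 * s * q * x 0 N + q ^+ 2 * (1 + s ^+ 2) != 0.
  have -> : x 0 N ^+ 2 * (1 + s ^+ 2) + 4 * s * q * x 0 N + q ^+ 2 * (1 + s ^+ 2) =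
     (1 + s ^+ 2) * (x 0 N ^+ 2 + 4 * s / (1 + s ^+ 2) * q * x 0 N + q ^+ 2) by field.
  by rewrite mulf_neq0.
by field; rewrite u0 B1 J0 s0 q0.
Qed.


Definition cee := J * (1 - h) + g * J * A * q / (2 * B).
Definition ceW := g * J / (2 * q) - g * J * A * Z / (2 * B * q).
Definition cYe := g * J * h * q / (2 * B).
Definition cYW := - (g * J * h * Z / (2 * B * q)).
Definition a0 := (h * J)^-1.
Definition Dl := J ^+ 2 * h.
Definition d1 := (- (a0 * cee) * (h * J + q ^+ 2 * cYW) + q ^+ 2 * cYe * (a0 * ceW)) / Dl.
Definition d2 := - ceW / Dl.
Definition d3 := - cYe / Dl.
Definition d4 := (- (a0 * cYW) * (h * J + cee) + ceW * (a0 * cYe)) / Dl.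
Definition Minv : 'M[R]_n.+1 := \matrix_(i, k)
  (a0 * (k == i)%:R + ((i == N)%:R * d1 + Yv 0 i * d3) * (k == N)%:R
   + ((i == N)%:R * d2 + Yv 0 i * d4) * Wv 0 k).

Lemma rowMinv i : d i *m Minv =
  a0 *: d i + ((i == N)%:R * d1 + Yv 0 i * d3) *: e + ((i == N)%:R * d2 + Yv 0 i * d4) *: Wv.
Proof.
apply/rowP => k; rewrite -rowE !mxE.
by rewrite eqxx.
Qed.

Lemma dotDl (u1 u2 w : 'rV[R]_n.+1) : dot (u1 + u2) w = dot u1 w + dot u2 w.
Proof. by rewrite /dot mulmxDl mxE. Qed.
Lemma dotDr (u w1 w2 : 'rV[R]_n.+1) : dot u (w1 + w2) = dot u w1 + dot u w2.
Proof. by rewrite /dot linearD mulmxDr mxE. Qed.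

Lemma M2 : Minv *m sigJac r g x = 1%:M.
Proof.
apply/matrixP => i j.
rewrite mul_dot rowMinv ciE.
rewrite !(dotDl, dotDr, dotZl, dotZr) dot_WY.
rewrite ?dot_deltal ?dot_deltar Yv_N Wv_N !deltaE eqxx [in RHS]mxE [N == j]eq_sym /=.
have q0 : q != 0 by rewrite gt_eqF.
have J0 : J != 0 by rewrite gt_eqF // J_gt0.
have B0 := BB_neq0 gb hq; have h0 := hh_neq0 gb.
rewrite /d1 /d2 /d3 /d4 /Dl /a0 /cee /ceW /cYe /cYW /al /be /dJv /dJ !dq_xd !delta_e.
move: B0; rewrite /AA /BB /Zc => B0.
by field; rewrite B0 q0 h0 J0.
Qed.


Hypothesis rpos : forall v : 'rV[R]_n, v != 0 -> 0 < (v *m r *m v^T) 0 0.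

Lemma det_r0 : \det r != 0.
Proof.
apply/det0P => -[v v0 vr]; have := rpos v0.
by rewrite vr mul0mx mxE ltxx.
Qed.

Lemma det_rf : \det rf = \det r.
Proof.
rewrite (expand_det_row _ N) sumS big1 ?add0r; last by move=> a _; rewrite rf_Nl mul0r.
rewrite rf_NN mul1r /cofactor -signr_odd addnn odd_double expr0 mul1r.
congr (\det _); apply/matrixP => a b; rewrite !mxE.
by rewrite !liftK.
Qed.

Lemma rf_unit : rf \in unitmx.
Proof. by rewrite unitmxE det_rf unitfE det_r0. Qed.

Lemma LlL : Llow r g x *m (Lup r g x)^T = 1%:M.
Proof.
rewrite [LHS]mx11_scalar; congr (_%:M).
rewrite /Llow -/(bil rf _ _) LupE bilZl bilZr bil_ss -Sg2.
have Sg0 : Sg != 0 by rewrite gt_eqF // Sg_gt0.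
by field.
Qed.

Lemma M3 : Nm *m Cm = 1%:M.
Proof.
set L := Lup r g x; set Ll := Llow r g x.
have rfu := rf_unit.
have e1 : rf *m invmx rf = 1%:M by rewrite mulmxV.
have e2 : rf *m (L^T *m L) = Ll^T *m L by rewrite mulmxA /Ll /Llow trmx_mul rf_sym.
have e3 : Ll^T *m Ll *m invmx rf = Ll^T *m L by rewrite -mulmxA /Ll /Llow mulmxK.
have e4 : Ll^T *m Ll *m (L^T *m L) = Ll^T *m L.
  by rewrite mulmxA -(mulmxA Ll^T) /Ll LlL mulmx1.
have e5 : Ll *m L^T = 1%:M by exact: LlL.
rewrite /Nm /Cm -/L -/Ll; clearbody L Ll.
rewrite mulmxBl !mulmxDr -!scalemxAl -!scalemxAr !scalerA.
rewrite e1 e2 e3 e4.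
have h0 := hh_neq0 gb.
have -> : h ^- 2 * h ^+ 2 = 1 by rewrite mulVf // expf_neq0.
rewrite scale1r -scalerDl -addrA -scalerBl.
have -> : h ^- 2 * (g ^+ 2 / 4) - (GG g ^+ 2 / 4 * h ^+ 2 + GG g ^+ 2 / 4 * (g ^+ 2 / 4)) = 0.
  have h20 : 1 - g ^+ 2 / 4 != 0 by rewrite -(hh2 gb) expf_neq0.
  rewrite /GG expr_div_n (hh2 gb); field; apply: contra h20 => /eqP E; apply/eqP.
  have -> : 1 - g ^+ 2 / 4 = (4 - g ^+ 2) / 4 by field.
  by rewrite E mul0r.
by rewrite scale0r addr0.
Qed.


Lemma NmE : Nm = ((h ^+ 2)^-1 *: rf) *m
   (1%:M - ((GG g ^+ 2 / 4 * h ^+ 2) *: Lup r g x)^T *m Llow r g x).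
Proof.
have h0 := hh_neq0 gb.
rewrite mulmxBr mulmx1 /Nm; congr (_ - _).
have rfLT : rf *m (Lup r g x)^T = (Llow r g x)^T by rewrite /Llow trmx_mul rf_sym.
rewrite linearZ /= -scalemxAl -scalemxAr -scalemxAl [rf *m _]mulmxA rfLT scalerA.
by congr (_ *: _); field.
Qed.

Lemma det_rank1 m (u w : 'rV[R]_m) : \det (1%:M - u^T *m w) = 1 - (w *m u^T) 0 0.
Proof.
have E : block_mx (1%:M - u^T *m w) u^T 0 1%:M *m block_mx 1%:M 0 w 1%:M
       = block_mx 1%:M 0 w 1%:M *m block_mx 1%:M u^T 0 (1%:M - w *m u^T).
  rewrite !mulmx_block !mulmx1 !mul1mx !mul0mx !mulmx0 !addr0 !add0r.
  by rewrite subrK addrC subrK.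
have := congr1 determinant E.
rewrite !det_mulmx !det_ublock !det_lblock !det1 !mul1r !mulr1.
by move=> ->; rewrite det_mx11 !mxE eqxx.
Qed.

Lemma det_Nm : \det Nm = h ^- (2 * n) * \det r.
Proof.
have h0 := hh_neq0 gb.
rewrite NmE det_mulmx detZ det_rf det_rank1 linearZ /= -scalemxAr mxE LlL mxE eqxx /=.
have -> : 1 - GG g ^+ 2 / 4 * h ^+ 2 * 1 = h ^+ 2.
  by rewrite /GG expr_div_n (hh2 gb); field; rewrite four_g2.
rewrite mulrAC; congr (_ * _).
by rewrite exprVn -exprM mulnSr exprD invfM -mulrA mulVf ?mulr1 // expf_neq0.
Qed.

End Point.


Lemma invmx_sandwich (R : realType) m (Jm Nn : 'M[R]_m) :
  Jm \in unitmx -> Nn \in unitmx ->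
  Jm *m invmx (Jm^T *m Nn *m Jm) *m Jm^T = invmx Nn.
Proof.
move=> Ju Nu.
have JTu : Jm^T \in unitmx by rewrite unitmx_tr.
have Pu : Jm^T *m Nn *m Jm \in unitmx by rewrite !unitmx_mul JTu Nu Ju.
have E : invmx (Jm^T *m Nn *m Jm) = invmx Jm *m invmx Nn *m invmx Jm^T.
  have H : (Jm^T *m Nn *m Jm) *m (invmx Jm *m invmx Nn *m invmx Jm^T) = 1%:M.
    by rewrite !mulmxA (mulmxK Ju) (mulmxK Nu) (mulmxV JTu).
  by rewrite -[LHS]mulmx1 -H mulmxA mulVmx // mul1mx.
by rewrite E !mulmxA (mulmxV Ju) mul1mx (mulmxKV JTu).
Qed.

Unset Implicit Arguments.

Theorem theorem2p15 (R : realType) (n : nat) (r : 'M[R]_n) (g : R)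
  (x : 'rV[R]_n.+1) :
  (0 < n)%N ->
  r^T = r ->
  (forall v : 'rV[R]_n, v != 0 -> 0 < (v *m r *m v^T) 0 0) ->
  -2 < g < 2 ->
  0 < qq r x ->
  [/\ nup r g x = hh g ^+ 2 *: invmx (rfull r)
                  + (g ^+ 2 / 4) *: ((Lup r g x)^T *m Lup r g x),
      nup r g x \in unitmx,
      invmx (nup r g x) = (hh g ^+ 2)^-1 *: rfull r
                  - (GG g ^+ 2 / 4) *: ((Llow r g x)^T *m Llow r g x)
    & \det (invmx (nup r g x)) = hh g ^- (2 * n) * \det r].
Proof.
move=> _ rsym rpos gb hq.
have Ju : sigJac r g x \in unitmx by case: (mulmx1_unit (M2 rsym gb hq)).
have NC := M3 rsym gb hq rpos.
have [Nu Cu] := mulmx1_unit NC.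
have CN : Cm r g x = invmx (Nm r g x).
  by rewrite -[RHS]mulmx1 -NC mulmxA mulVmx // mul1mx.
have nupE : nup r g x = Cm r g x.
  by rewrite /nup /ginv (M1 rsym gb hq) invmx_sandwich // CN.
have iN : invmx (nup r g x) = Nm r g x by rewrite nupE CN invmxK.
split => //.
- by rewrite nupE.
- by rewrite iN (det_Nm rsym gb hq).
Qed.
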